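(* Let $m\ge 1$ and let $\Delta_{m-1}=\{\alpha\in\mathbb{R}^m:\alpha_i\ge 0,\ \sum_{i=1}^m\alpha_i=1\}$. For each $i\in\{1,\dots,m\}$ let $g_i(x,y)\in\mathbb{R}^d$ (defined for all inputs $x$ and targets $y$) be the input gradient of the loss of the model using only tool $i$, and for $\alpha\in\Delta_{m-1}$ let $g_\alpha(x,y)=\nabla_x\mathcal{J}_\alpha(x,y)$ be the input gradient of the soft-composed loss $\mathcal{J}_\alpha$. Define the gradient alignment coefficient $$\rho_g=\max\Big\{0,\ \sup_{i\neq j}\ \sup_{(x,y)}\ \cos\big(g_i(x,y),g_j(x,y)\big)\Big\}\in[0,1].$$ Assume (bounded gradients) there is $G\ge 0$ with $\|g_i(x,y)\|_2\le G$ for all $i$ and all $(x,y)$, and (linear aggregation with bounded residual) for every $\alpha\in\Delta_{m-1}$ and all $(x,y)$, $$g_\alpha(x,y)=\sum_{i=1}^m\alpha_i g_i(x,y)+\xi_\alpha(x,y)\quad\text{with}\quad\|\xi_\alpha(x,y)\|_2\le\delta_g .$$ Then for every $\alpha\in\Delta_{m-1}$ and all $(x,y)$, $$\|g_\alpha(x,y)\|_2\le G\sqrt{\rho_g+(1-\rho_g)\|\alpha\|_2^2}+\delta_g .$$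
   Context: Setting: a base LLM with parameters $\theta$ and $m$ tools, tool $i$ being represented by a parameter increment $\Delta\theta_i$. For aggregation weights $\alpha$ in the probability simplex, $\mathcal{J}_\alpha(x,y)$ is the loss of the model with parameters $\theta+\sum_i\alpha_i\Delta\theta_i$ on input context $x$ (viewed as a vector in $\mathbb{R}^d$) and target action $y$; $g_i$ is the input gradient of the loss of the model with parameters $\theta+\Delta\theta_i$. $\cos(u,v)=\langle u,v\rangle/(\|u\|_2\|v\|_2)$. *)

(* Defs.v *)
From HB Require Import structures.
From mathcomp Require Import all_boot all_order all_algebra.
From mathcomp Require Import boolp classical_sets reals.
Set Implicit Arguments. Unset Strict Implicit. Unset Printing Implicit Defensive.
Import Order.TTheory GRing.Theory Num.Theory.
Local Open Scope ring_scope.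
Local Open Scope classical_set_scope.

Definition dotv (R : realType) (d : nat) (u v : 'rV[R]_d) : R :=
  \sum_(k < d) u 0 k * v 0 k.
Definition norm2 (R : realType) (d : nat) (u : 'rV[R]_d) : R :=
  Num.sqrt (dotv u u).
(* cosine similarity; by Rocq's convention x / 0 = 0, cos is 0 if a vector is 0 *)
Definition cosv (R : realType) (d : nat) (u v : 'rV[R]_d) : R :=
  dotv u v / (norm2 u * norm2 v).

Definition wnorm2 (R : realType) (m : nat) (a : 'I_m -> R) : R :=
  Num.sqrt (\sum_(i < m) a i ^+ 2).

Definition in_simplex (R : realType) (m : nat) (a : 'I_m -> R) : Prop :=
  (forall i, 0 <= a i) /\ \sum_(i < m) a i = 1.

Definition rho_g (R : realType) (m d : nat) (Y : Type)
    (g : 'I_m -> 'rV[R]_d -> Y -> 'rV[R]_d) : R :=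
  Num.max 0 (sup [set c : R | exists (i j : 'I_m) (x : 'rV[R]_d) (y : Y),
                   i != j /\ c = cosv (g i x y) (g j x y)]).

(* Main.v *)
Require Import Defs.
From HB Require Import structures.
From mathcomp Require Import all_boot all_order all_algebra.
From mathcomp Require Import boolp classical_sets reals.
From mathcomp Require Import ring lra.
Import Order.TTheory GRing.Theory Num.Theory.
Local Open Scope ring_scope.

Section Aux.
Variables (R : realType) (d : nat).
Implicit Types u v : 'rV[R]_d.

Lemma dotvC u v : dotv u v = dotv v u.
Proof. by apply: eq_bigr => k _; rewrite mulrC. Qed.

Lemma dotv_ge0 u : 0 <= dotv u u.
Proof. by apply: sumr_ge0 => k _; rewrite -expr2 sqr_ge0. Qed.

Lemma norm2_sqr u : norm2 u ^+ 2 = dotv u u.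
Proof. by rewrite /norm2 sqr_sqrtr // dotv_ge0. Qed.

Lemma norm2_ge0 u : 0 <= norm2 u.
Proof. exact: sqrtr_ge0. Qed.

Lemma dotv0 u v : dotv u u = 0 -> dotv u v = 0.
Proof.
move=> H.
have Hn : forall k : 'I_d, true -> 0 <= u 0 k * u 0 k by move=> k _; rewrite -expr2 sqr_ge0.
have Hk := psumr_eq0P Hn H.
rewrite /dotv big1 // => k _.
have /eqP : u 0 k * u 0 k = 0 by apply: Hk.
by rewrite mulf_eq0 orbb => /eqP ->; rewrite mul0r.
Qed.

Lemma CS u v : dotv u v <= norm2 u * norm2 v.
Proof.
set a := norm2 u; set b := norm2 v.
have H0 : 0 <= \sum_(k < d) (b * u 0 k - a * v 0 k) ^+ 2.
  by apply: sumr_ge0 => k _; rewrite sqr_ge0.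
have E : \sum_(k < d) (b * u 0 k - a * v 0 k) ^+ 2 =
   b ^+ 2 * dotv u u - 2 * a * b * dotv u v + a ^+ 2 * dotv v v.
  rewrite /dotv !mulr_sumr -sumrB -big_split /=; apply: eq_bigr => k _; ring.
rewrite E -!norm2_sqr -/a -/b in H0.
have a0 : 0 <= a by exact: norm2_ge0.
have b0 : 0 <= b by exact: norm2_ge0.
have [ab0|abp] := eqVneq (a * b) 0.
  move/eqP: ab0; rewrite mulf_eq0 => /orP [] /eqP h.
    rewrite dotv0 ?h ?mul0r // -norm2_sqr -/a h; by rewrite expr0n.
  rewrite dotvC dotv0 ?h ?mulr0 // -norm2_sqr -/b h; by rewrite expr0n.
have abp' : 0 < a * b by rewrite lt_neqAle eq_sym abp mulr_ge0.
nra.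
Qed.

Lemma dotvD u v : dotv (u + v) (u + v) = dotv u u + 2 * dotv u v + dotv v v.
Proof.
rewrite /dotv mulr_sumr -!big_split /=; apply: eq_bigr => k _; rewrite !mxE; ring.
Qed.

Lemma norm2D u v : norm2 (u + v) <= norm2 u + norm2 v.
Proof.
rewrite {1}/norm2 -[norm2 u + norm2 v]ger0_norm ?addr_ge0 ?norm2_ge0 //.
rewrite -sqrtr_sqr ler_wsqrtr // dotvD.
have := CS u v; rewrite -!norm2_sqr; lra.
Qed.

Lemma cos_le1 u v : cosv u v <= 1.
Proof.
rewrite /cosv; have := CS u v.
have h : 0 <= norm2 u * norm2 v by rewrite mulr_ge0 ?norm2_ge0.
have [z|p] := eqVneq (norm2 u * norm2 v) 0.
  by rewrite z invr0 mulr0 ler01.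
have p' : 0 < norm2 u * norm2 v by rewrite lt_neqAle eq_sym p h.
by move=> H; rewrite ler_pdivrMr // mul1r.
Qed.

Lemma dot_le_cos u v r : cosv u v <= r -> 0 <= r ->
  dotv u v <= r * (norm2 u * norm2 v).
Proof.
rewrite /cosv => Hc r0; have := CS u v.
have h : 0 <= norm2 u * norm2 v by rewrite mulr_ge0 ?norm2_ge0.
have [z|p] := eqVneq (norm2 u * norm2 v) 0.
  by rewrite z mulr0.
have p' : 0 < norm2 u * norm2 v by rewrite lt_neqAle eq_sym p h.
by move: Hc; rewrite ler_pdivrMr.
Qed.

Lemma dot_sum (m : nat) (a : 'I_m -> R) (h : 'I_m -> 'rV[R]_d) :
  dotv (\sum_(i < m) a i *: h i) (\sum_(i < m) a i *: h i) =
  \sum_(i < m) \sum_(j < m) (a i * a j * dotv (h i) (h j)).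
Proof.
have Ek : forall k, (\sum_(i < m) a i *: h i) 0 k = \sum_(i < m) a i * h i 0 k.
  by move=> k; rewrite summxE; apply: eq_bigr => i _; rewrite mxE.
rewrite /dotv.
under eq_bigr => k _ do rewrite Ek mulr_suml.
under eq_bigr => k _ do under eq_bigr => i _ do rewrite mulr_sumr.
rewrite exchange_big /=; apply: eq_bigr => i _.
rewrite exchange_big /=; apply: eq_bigr => j _.
rewrite mulr_sumr; apply: eq_bigr => k _; ring.
Qed.

End Aux.

Theorem theorem3p6 (R : realType) (m d : nat) (Y : Type)
    (g : 'I_m -> 'rV[R]_d -> Y -> 'rV[R]_d)
    (g_soft : ('I_m -> R) -> 'rV[R]_d -> Y -> 'rV[R]_d)
    (G delta_g : R) :
  (1 <= m)%N ->
  0 <= G ->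
  (forall i x y, norm2 (g i x y) <= G) ->
  (forall alpha, in_simplex alpha -> forall x y,
     exists xi : 'rV[R]_d,
       g_soft alpha x y = \sum_(i < m) alpha i *: g i x y + xi /\
       norm2 xi <= delta_g) ->
  forall alpha, in_simplex alpha -> forall x y,
    norm2 (g_soft alpha x y)
      <= G * Num.sqrt (rho_g g + (1 - rho_g g) * wnorm2 alpha ^+ 2) + delta_g.
Proof.
move=> _ G0 Hg Hsoft a Ha x y.
have [xi [-> Hxi]] := Hsoft a Ha x y.
set rho := rho_g g.
have rho0 : 0 <= rho by rewrite /rho /rho_g le_max lexx.
have Hcos : forall i j, i != j -> cosv (g i x y) (g j x y) <= rho.
  move=> i j ij; rewrite /rho /rho_g le_max; apply/orP; right.
  apply: ub_le_sup.
    exists 1 => c [i' [j' [x' [y' [_ ->]]]]]; exact: cos_le1.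
  by exists i, j, x, y.
have Hdot : forall i j, dotv (g i x y) (g j x y) <=
    (if i == j then 1 else rho) * G ^+ 2.
  move=> i j; case: eqP => [->|/eqP ij].
    rewrite mul1r -norm2_sqr lerXn2r ?nnegrE ?norm2_ge0 //.
  have H1 := @dot_le_cos _ _ _ _ _ (Hcos _ _ ij) rho0.
  apply: (le_trans H1).
  by rewrite ler_wpM2l // expr2 ler_pM ?norm2_ge0.
have [a0 a1] := Ha.
have Hs : dotv (\sum_(i < m) a i *: g i x y) (\sum_(i < m) a i *: g i x y)
   <= G ^+ 2 * (rho + (1 - rho) * wnorm2 a ^+ 2).
  rewrite dot_sum.
  apply: le_trans (_ : \sum_(i < m) \sum_(j < m)
      (a i * a j * ((if i == j then 1 else rho) * G ^+ 2)) <= _).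
    apply: ler_sum => i _; apply: ler_sum => j _.
    by rewrite ler_wpM2l ?mulr_ge0.
  have -> : \sum_(i < m) \sum_(j < m)
      (a i * a j * ((if i == j then 1 else rho) * G ^+ 2)) =
      \sum_(i < m) \sum_(j < m)
      (G ^+ 2 * rho * (a i * a j) + G ^+ 2 * (1 - rho) * (if j == i then a i ^+ 2 else 0)).
    apply: eq_bigr => i _; apply: eq_bigr => j _.
    rewrite eq_sym; case: eqP => [->|_]; ring.
  under eq_bigr => i _ do rewrite big_split /= -!mulr_sumr -big_mkcond big_pred1_eq /=.
  rewrite big_split /= -!mulr_sumr.
  rewrite a1; under eq_bigr => i _ do rewrite mulr1.
  rewrite a1.
  rewrite /wnorm2 sqr_sqrtr; last by apply: sumr_ge0 => i _; rewrite sqr_ge0.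
  by rewrite mulr1 -mulrA -mulrDr.
apply: le_trans (norm2D _ _ _ _) _; apply: lerD => //.
rewrite {1}/norm2 -[G]ger0_norm // -sqrtr_sqr -sqrtrM ?sqr_ge0 //.
exact: ler_wsqrtr Hs.
Qed.
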